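(* Let $k$ be a field of characteristic $0$, $R=k[x_1,\dots,x_n]$, $\ell=x_1+\dots+x_n$, let $d_1,\dots,d_n$ be positive integers such that $I=(x_1^{d_1},\dots,x_{n-1}^{d_{n-1}},x_n^2,\ell^{d_n})$ is minimally generated by these elements, and let $G=(x_1^{d_1},\dots,x_{n-1}^{d_{n-1}},x_n^2)\colon(\ell^{d_n})$. If $t=\sum_{i=1}^n(d_i-1)$ is odd, then $I\colon(x_n)=I+(x_n)$ and $G\colon(x_n)=G+(x_n)$; equivalently, the sequences $$0\to R/(I+(x_n))(-1)\xrightarrow{\cdot x_n}R/I\to R/(I+(x_n))\to0,\qquad 0\to R/(G+(x_n))(-1)\xrightarrow{\cdot x_n}R/G\to R/(G+(x_n))\to0$$ are exact. *)

(* Defs.v *)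
From HB Require Import structures.
From mathcomp Require Import all_boot all_order all_algebra.
From mathcomp Require Import mpoly.
Set Implicit Arguments. Unset Strict Implicit. Unset Printing Implicit Defensive.
Import GRing.Theory.
Local Open Scope ring_scope.

Section IdealDefs.
Variable (k : fieldType) (n : nat).
Local Notation R := {mpoly k[n]}.

Definition in_ideal (s : seq R) (f : R) : Prop :=
  exists c : seq R, f = \sum_(i < size s) c`_i * s`_i.

Definition minimal_gens (s : seq R) : Prop :=
  forall i : nat, (i < size s)%N -> ~ in_ideal (take i s ++ drop i.+1 s) s`_i.

Definition colon (J : R -> Prop) (h : R) : R -> Prop := fun f => J (f * h).
Definition add_principal (J : R -> Prop) (h : R) : R -> Prop :=
  fun f => exists a b : R, J a /\ f = a + b * h.

Definition ideal_eq (J1 J2 : R -> Prop) : Prop := forall f, J1 f <-> J2 f.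
End IdealDefs.

(* Setting: the paper's n variables are here n.+1 variables indexed by 'I_n.+1;
   the paper's x_i is 'X_(i-1), its last variable x_n is 'X_ord_max. *)
Section Gens.
Variable (k : fieldType) (n : nat) (d : 'I_n.+1 -> nat).
Local Notation R := {mpoly k[n.+1]}.

Definition ell : R := \sum_(i < n.+1) 'X_i.

Definition J_gens : seq R :=
  [seq 'X_(widen_ord (leqnSn n) i) ^+ d (widen_ord (leqnSn n) i) | i <- enum 'I_n]
  ++ [:: 'X_ord_max ^+ 2].

Definition I_gens : seq R := rcons J_gens (ell ^+ d ord_max).

Definition Iideal : R -> Prop := in_ideal I_gens.
Definition Gideal : R -> Prop := colon (in_ideal J_gens) (ell ^+ d ord_max).
End Gens.

(* Main.v *)
Require Import Defs.
From HB Require Import structures.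
From mathcomp Require Import all_boot all_order all_algebra.
From mathcomp Require Import mpoly.
From mathcomp Require Import ring.
Set Implicit Arguments. Unset Strict Implicit. Unset Printing Implicit Defensive.
Import GRing.Theory.
Local Open Scope ring_scope.

Section Diag.
Variables (k : fieldType) (N : nat).
Local Notation R := {mpoly k[N]}.
Implicit Types (p q : R) (g : 'X_{1..N} -> k).

Definition Dg g p : R := \sum_(m <- msupp p) (g m * p@_m) *: 'X_[m].

Lemma mcoeff_D g p a : (Dg g p)@_a = g a * p@_a.
Proof.
rewrite /Dg (big_morph (mcoeff a) (mcoeffD a) (mcoeff0 _ a)).
under eq_bigr do rewrite mcoeffZ mcoeffX.
case: (boolP (a \in msupp p)) => Ha.
  rewrite (bigD1_seq a) //= ?msupp_uniq // eqxx mulr1 big1 ?addr0 //.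
  by move=> m /negbTE; rewrite eq_sym => ->; rewrite mulr0.
rewrite big_seq big1.
  by move: Ha; rewrite mcoeff_msupp negbK => /eqP ->; rewrite mulr0.
move=> m Hm; case: eqP => [Em|_]; last by rewrite mulr0.
by move: Ha; rewrite -Em Hm.
Qed.

Lemma D_ext g g' p : g =1 g' -> Dg g p = Dg g' p.
Proof. by move=> E; apply/mpolyP => a; rewrite !mcoeff_D E. Qed.

Lemma DD g p q : Dg g (p + q) = Dg g p + Dg g q.
Proof. by apply/mpolyP => a; rewrite mcoeffD !mcoeff_D mcoeffD mulrDr. Qed.

Lemma D0 g : Dg g 0 = 0.
Proof. by apply/mpolyP => a; rewrite mcoeff_D !mcoeff0 mulr0. Qed.

Lemma DN g p : Dg g (- p) = - Dg g p.
Proof. by apply/mpolyP => a; rewrite mcoeffN !mcoeff_D mcoeffN mulrN. Qed.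

Lemma DZ g c p : Dg g (c *: p) = c *: Dg g p.
Proof. by apply/mpolyP => a; rewrite mcoeffZ !mcoeff_D mcoeffZ mulrCA. Qed.

Lemma D_sum g I (r : seq I) (F : I -> R) :
  Dg g (\sum_(i <- r) F i) = \sum_(i <- r) Dg g (F i).
Proof. exact: (big_morph _ (DD g) (D0 g)). Qed.

Lemma DX g m : Dg g 'X_[m] = g m *: 'X_[m].
Proof.
apply/mpolyP => a; rewrite mcoeff_D mcoeffZ mcoeffX.
by case: eqP => [->|]; rewrite ?mulr0 ?mulr1.
Qed.

Lemma D1 p : Dg (fun _ => 1) p = p.
Proof. by apply/mpolyP => a; rewrite mcoeff_D mul1r. Qed.

Lemma DDg g g' p : Dg g (Dg g' p) = Dg (fun a => g a * g' a) p.
Proof. by apply/mpolyP => a; rewrite !mcoeff_D mulrA. Qed.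

Lemma DZg g c p : c *: Dg g p = Dg (fun a => c * g a) p.
Proof. by apply/mpolyP => a; rewrite mcoeffZ !mcoeff_D mulrA. Qed.

Lemma DBg g g' p : Dg g p - Dg g' p = Dg (fun a => g a - g' a) p.
Proof. by apply/mpolyP => a; rewrite mcoeffB !mcoeff_D mulrBl. Qed.

Lemma DC c p : Dg (fun _ => c) p = c *: p.
Proof. by apply/mpolyP => a; rewrite mcoeffZ !mcoeff_D. Qed.

Lemma D_sumg I (r : seq I) (G : I -> 'X_{1..N} -> k) p :
  Dg (fun a => \sum_(i <- r) G i a) p = \sum_(i <- r) Dg (G i) p.
Proof.
apply/mpolyP => a; rewrite mcoeff_D (big_morph (mcoeff a) (mcoeffD a) (mcoeff0 _ a)).
by rewrite mulr_suml; apply: eq_bigr => i _; rewrite mcoeff_D.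
Qed.

Lemma DMX g q b : Dg g (q * 'X_[b]) = Dg (fun a => g (a + b)%MM) q * 'X_[b].
Proof.
elim/mpolyind: q => [|c m p _ _ IH]; first by rewrite mul0r !D0 mul0r.
rewrite mulrDl DD IH DD mulrDl; congr (_ + _).
by rewrite -scalerAl -mpolyXD !DZ !DX -!scalerAl -mpolyXD.
Qed.

End Diag.

Section Setting.
Variables (k : fieldType) (n : nat) (d : 'I_n.+1 -> nat).
Local Notation R := {mpoly k[n.+1]}.
Local Notation wi := (widen_ord (leqnSn n)).

Definition zz : R := 'X_ord_max.
Definition mm : R := \sum_(i < n) 'X_(wi i).
Definition inM (p : R) := exists c : 'I_n -> R, p = \sum_(i < n) c i * 'X_(wi i) ^+ d (wi i).
Definition hh (a : 'X_{1..n.+1}) : k :=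
  \sum_(i < n) ((a (wi i))%:R *+ 2 - ((d (wi i))%:R - 1)).

Lemma wi_eq (i j : 'I_n) : (wi i == wi j) = (i == j).
Proof. by rewrite -val_eqE /= val_eqE. Qed.

Lemma wi_max (i : 'I_n) : (ord_max == wi i) = false.
Proof. by rewrite -val_eqE /= gtn_eqF. Qed.

Lemma hU j a : hh (a + U_(wi j))%MM = hh a + 2.
Proof.
rewrite /hh.
have -> : (2 : k) = \sum_(i < n) ((j == i)%:R *+ 2).
  rewrite (bigD1 j) //= eqxx big1 ?addr0 // => i /negbTE.
  by rewrite eq_sym => ->; rewrite mul0rn.
rewrite -big_split /=; apply: eq_bigr => i _.
rewrite mnmDE mnm1E wi_eq natrD mulrnDl; ring.
Qed.

Lemma hUz a : hh (a + U_(ord_max))%MM = hh a.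
Proof.
rewrite /hh; apply: eq_bigr => i _.
by rewrite mnmDE mnm1E wi_max addn0.
Qed.

Lemma Dmm (phi : k -> k) q :
  Dg (fun a => phi (hh a)) (mm * q) = mm * Dg (fun a => phi (hh a + 2)) q.
Proof.
rewrite /mm !mulr_suml D_sum; apply: eq_bigr => i _.
rewrite mulrC DMX mulrC; congr (_ * _); apply: D_ext => a.
by rewrite hU.
Qed.

Lemma Dmm_pow j (phi : k -> k) q :
  Dg (fun a => phi (hh a)) (mm ^+ j * q) =
  mm ^+ j * Dg (fun a => phi (hh a + j%:R *+ 2)) q.
Proof.
elim: j phi => [|j IH] phi.
  by rewrite expr0 !mul1r; apply: D_ext => a; rewrite mulr0n mul0rn addr0.

rewrite exprS -mulrA Dmm (IH (fun x => phi (x + 2))) mulrA.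
congr (_ * _); apply: D_ext => a; congr phi.
rewrite -addrA; congr (_ + _); rewrite -[in RHS]addn1 natrD mulrnDl; ring.
Qed.

Lemma inM_D g p : inM p -> inM (Dg g p).
Proof.
case=> c ->; rewrite D_sum.
exists (fun i => Dg (fun a => g (a + (U_(wi i) *+ d (wi i)))%MM) (c i)).
apply: eq_bigr => i _.
by rewrite mpolyXn DMX.
Qed.


Lemma dvX (l j : 'I_n.+1) : ('X_l : R)^`M(j) = (l == j)%:R.
Proof.
rewrite mderivX mnm1E; case: eqP => [->|_]; last by rewrite scale0r.
have -> : (U_(j) - U_(j))%MM = 0%MM by apply/mnmP => i; rewrite mnmBE subnn mnm0E.
by rewrite mpolyX0 scale1r.
Qed.

Lemma dv_nat (j : 'I_n.+1) m : ((m%:R : R))^`M(j) = 0.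
Proof. by rewrite -mpolyC_nat mderivC. Qed.

Lemma dv1 (j : 'I_n.+1) : (1 : R)^`M(j) = 0.
Proof. by have := dv_nat j 1; rewrite mulr1n. Qed.

Lemma Euler (j : 'I_n.+1) (p : R) : 'X_j * p^`M(j) = Dg (fun a => (a j)%:R) p.
Proof.
elim/mpolyind: p => [|c m p _ _ IH]; first by rewrite mderiv0 mulr0 D0.
rewrite mderivD mulrDr IH DD; congr (_ + _).
rewrite mderivZ mderivX DZ DX -scalerAr; congr (_ *: _).
case: (posnP (m j)) => Hm; first by rewrite Hm !scale0r mulr0.
rewrite -scalerAr; congr (_ *: _).
rewrite -mpolyXD addmC submK //; apply/mnm_lepP => i; rewrite mnm1E.
by case: eqP => [<-|].
Qed.

Lemma EulerX (j : 'I_n.+1) e : 'X_j * (('X_j : R) ^+ e)^`M(j) = e%:R * 'X_j ^+ e.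
Proof.
elim: e => [|e IH]; first by rewrite expr0 dv1 mulr0 mul0r.
rewrite exprS mderivM dvX eqxx mulrDr mulrCA IH /=; ring.
Qed.

Lemma dvX0 (l j : 'I_n.+1) e : l != j -> (('X_l : R) ^+ e)^`M(j) = 0.
Proof.
move=> /negbTE H; elim: e => [|e IH]; first by rewrite expr0 dv1.
by rewrite exprS mderivM dvX H IH mulr0 mul0r addr0.
Qed.

Lemma dv_mm (i : 'I_n) : mm^`M(wi i) = 1.
Proof.
rewrite /mm raddf_sum (bigD1 i) //= dvX eqxx big1 ?addr0 // => j.
by rewrite dvX wi_eq => /negbTE ->.
Qed.

Definition Fop (p : R) : R :=
  \sum_(i < n) (((d (wi i))%:R - 1) * p^`M(wi i) - 'X_(wi i) * p^`M(wi i)^`M(wi i)).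

Lemma FD p q : Fop (p + q) = Fop p + Fop q.
Proof.
rewrite /Fop -big_split; apply: eq_bigr => i _ /=.
rewrite !mderivD; ring.
Qed.

Lemma F0 : Fop 0 = 0.
Proof. by rewrite /Fop big1 // => i _; rewrite mderiv0 mderiv0 !mulr0 subr0. Qed.

Lemma FN p : Fop (- p) = - Fop p.
Proof. by apply/eqP; rewrite -subr_eq0 opprK -FD addNr F0. Qed.

Lemma F_sum I (r : seq I) (G : I -> R) : Fop (\sum_(i <- r) G i) = \sum_(i <- r) Fop (G i).
Proof. exact: (big_morph _ FD F0). Qed.

Lemma DMn (g : 'X_{1..n.+1} -> k) (p : R) e : Dg (fun a => g a *+ e) p = Dg g p *+ e.
Proof. by apply/mpolyP => a; rewrite mcoeffMn !mcoeff_D mulrnAl. Qed.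

Lemma Dhh (q : R) : Dg hh q =
  \sum_(i < n) ('X_(wi i) * q^`M(wi i) *+ 2 - ((d (wi i))%:R - 1) * q).
Proof.
rewrite /hh D_sumg; apply: eq_bigr => i _.
rewrite -DBg DMn DC Euler; congr (_ - _).
by rewrite scalerBl scale1r mulrBl mul1r scaler_nat mulr_natl.
Qed.

Lemma FA (q : R) : Fop (mm * q) = mm * Fop q - Dg hh q.
Proof.
rewrite /Fop Dhh mulr_sumr -sumrB; apply: eq_bigr => i _.
rewrite !mderivM !mderivD !mderivM dv_mm !mderivC.
ring.
Qed.


Lemma scal_id (j : nat) (u t : k) : (u + (j.+1)%:R *+ 2) * t =
  (j.+2)%:R * ((u + (j.+1)%:R) * t) - (j.+1)%:R * ((u + j%:R) * t).
Proof. rewrite -mulr_natr; ring. Qed.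

Lemma FB j (q : R) : Fop (mm ^+ j.+1 * q) =
  mm ^+ j.+1 * Fop q - (j.+1)%:R * mm ^+ j * Dg (fun a => hh a + j%:R) q.
Proof.
elim: j q => [|j IH] q.
  rewrite expr1 FA expr0 (@D_ext _ _ (fun a => hh a + 0%:R) hh); first by ring.
  by move=> a; rewrite mulr0n addr0.
have H := Dmm_pow (j.+1) (fun x => x) q; simpl in H.
rewrite exprS -mulrA FA IH H.
set A := Dg (fun a => hh a + j%:R) q.
set B := Dg _ q.
set C := Dg (fun a => hh a + (j.+1)%:R) q.
have key : B = (j.+2)%:R * C - (j.+1)%:R * A.
  rewrite /A /B /C !mulr_natl -!scaler_nat; apply/mpolyP => a.
  rewrite mcoeffB !mcoeffZ !mcoeff_D.
  exact: scal_id.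
rewrite key !exprS; move: (mm ^+ j) => M; ring.
Qed.

Lemma F_X (c : R) (j : 'I_n) :
  Fop (c * 'X_(wi j) ^+ d (wi j)) =
  (Fop c - (d (wi j))%:R *+ 2 * c^`M(wi j)) * 'X_(wi j) ^+ d (wi j).
Proof.
have Hs : \sum_(i < n | i != j) (((d (wi i))%:R - 1) * (c * 'X_(wi j) ^+ d (wi j))^`M(wi i)
      - 'X_(wi i) * (c * 'X_(wi j) ^+ d (wi j))^`M(wi i)^`M(wi i)) =
    (\sum_(i < n | i != j) (((d (wi i))%:R - 1) * c^`M(wi i)
      - 'X_(wi i) * c^`M(wi i)^`M(wi i))) * 'X_(wi j) ^+ d (wi j).
  rewrite mulr_suml; apply: eq_bigr => i Hij.
  have Hl : wi j != wi i by rewrite wi_eq eq_sym.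
  rewrite !mderivM (dvX0 _ Hl) mulr0 addr0 !mderivM (dvX0 _ Hl) mulr0 addr0.
  ring.
rewrite /Fop (bigD1 j) //= [in RHS](bigD1 j) //= Hs.
move: (EulerX (wi j) (d (wi j))) => E1.
have E2 : ('X_(wi j) : R) * ('X_(wi j) ^+ d (wi j))^`M(wi j)^`M(wi j) =
    (d (wi j))%:R * ('X_(wi j) ^+ d (wi j))^`M(wi j) - ('X_(wi j) ^+ d (wi j))^`M(wi j).
  have := congr1 (fun p => p^`M(wi j)) E1; rewrite /= !mderivM dvX eqxx dv_nat.
  rewrite mul0r add0r /= mul1r => H.
  rewrite -H; ring.
rewrite !mderivM !mderivD !mderivM.
move: E1 E2.
move: ('X_(wi j) ^+ d (wi j)) (('X_(wi j) ^+ d (wi j))^`M(wi j))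
   (('X_(wi j) ^+ d (wi j))^`M(wi j)^`M(wi j)) => P P1 P2 E1 E2.
have -> : forall (x c1 c2 S : R) e, (e - 1) * (c1 * P + c * P1) -
  x * (c2 * P + c1 * P1 + (c1 * P1 + c * P2)) + S * P =
  (((e - 1) * c1 - x * c2) * P + S * P)
  + (e - 1) * c * P1 - 2%:R * c1 * (x * P1)
  - c * (x * P2) by move=> *; ring.
rewrite E1 E2; ring.
Qed.

Lemma inM_F p : inM p -> inM (Fop p).
Proof.
case=> c ->; rewrite F_sum.
exists (fun i => Fop (c i) - (d (wi i))%:R *+ 2 * (c i)^`M(wi i)).
by apply: eq_bigr => i _; rewrite F_X.
Qed.


Lemma inM0 : inM 0.
Proof. by exists (fun _ => 0); rewrite big1 // => i _; rewrite mul0r. Qed.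

Lemma inMD p q : inM p -> inM q -> inM (p + q).
Proof.
case=> c -> [c' ->]; exists (fun i => c i + c' i).
by rewrite -big_split; apply: eq_bigr => i _; rewrite mulrDl.
Qed.

Lemma inMN p : inM p -> inM (- p).
Proof.
case=> c ->; exists (fun i => - c i).
by rewrite -sumrN; apply: eq_bigr => i _; rewrite mulNr.
Qed.

Lemma inMM r p : inM p -> inM (r * p).
Proof.
case=> c ->; exists (fun i => r * c i).
by rewrite mulr_sumr; apply: eq_bigr => i _; rewrite mulrA.
Qed.

Lemma natr_inj (Hc : [pchar k] =i pred0) x y : (x%:R : k) = y%:R -> x = y.
Proof.
move/pcharf0P: Hc => Hc.
wlog le : x y / (x <= y)%N.
  move=> W H; case/orP: (leq_total x y) => [/W|/W W']; first exact.
  by symmetry; apply: W'.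
move=> H; have : ((y - x)%:R : k) == 0 by rewrite natrB // H subrr.
by rewrite Hc subn_eq0 => le'; apply/eqP; rewrite eqn_leq le le'.
Qed.

Definition ssum := (\sum_(i < n) (d (wi i) - 1))%N.

Lemma hh_nat (Hd : forall i, (0 < d i)%N) a :
  hh a = ((\sum_(i < n) a (wi i)) * 2)%:R - ssum%:R.
Proof.
rewrite /hh sumrB /ssum natrM mulr_natr !natr_sum -sumrMnl; congr (_ - _).
by apply: eq_bigr => i _; rewrite natrB.
Qed.

Lemma hh_ne0 (Hc : [pchar k] =i pred0) (Hd : forall i, (0 < d i)%N) c'
  (Hodd : odd (ssum + c')) a : hh a + c'%:R != 0.
Proof.
rewrite hh_nat // addrAC -natrD subr_eq0; apply/eqP => /(natr_inj Hc) E.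
by move: Hodd; rewrite -E -addnA addnn oddD odd_double oddM andbF.
Qed.

Lemma CL (Hc : [pchar k] =i pred0) (Hd : forall i, (0 < d i)%N) c'
  (Hodd : odd (ssum + c')) (p : R) :
  inM (mm ^+ c'.+1 * p) -> exists v w, inM v /\ mm ^+ c' * p = v + w * mm ^+ c'.+1.
Proof.
move=> Hp.
pose phi := fun x : k => ((c'.+1)%:R * (x + c'%:R))^-1.
pose p' := Dg (fun a => phi (hh a)) p.
have Hp' : inM (mm ^+ c'.+1 * p').
  have := Dmm_pow c'.+1 (fun x => phi (x - (c'.+1)%:R *+ 2)) p; rewrite /= => H.
  have E : Dg (fun a => phi (hh a + (c'.+1)%:R *+ 2 - (c'.+1)%:R *+ 2)) p = p'.
    by apply: D_ext => a; rewrite addrK.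
  rewrite -E -H; exact: inM_D.
have HF := inM_F Hp'.
have HB := FB c' p'.
have Hinv : (c'.+1)%:R * Dg (fun a => hh a + c'%:R) p' = p.
  rewrite mulr_natl -scaler_nat DDg DZg -[RHS]D1; apply: D_ext => a.
  rewrite /phi mulrA mulfV // mulf_neq0 ?hh_ne0 //.
  by move/pcharf0P: Hc => ->.
exists (- Fop (mm ^+ c'.+1 * p')), (Fop p'); split; first exact: inMN.
rewrite HB -{1}Hinv !exprS; move: (mm ^+ c') => M; ring.
Qed.


Definition sig (p : R) : R :=
  mmap (@mpolyC n.+1 k) (fun i => if i == ord_max then 0 else 'X_i) p.

Lemma sigD p q : sig (p + q) = sig p + sig q. Proof. exact: rmorphD. Qed.
Lemma sigN p : sig (- p) = - sig p. Proof. exact: rmorphN. Qed.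
Lemma sigM p q : sig (p * q) = sig p * sig q. Proof. exact: rmorphM. Qed.
Lemma sigXn p e : sig (p ^+ e) = sig p ^+ e. Proof. exact: rmorphXn. Qed.
Lemma sig0 : sig 0 = 0. Proof. exact: rmorph0. Qed.
Lemma sig1 : sig 1 = 1. Proof. exact: rmorph1. Qed.
Lemma sig_sum I (r : seq I) (G : I -> R) : sig (\sum_(i <- r) G i) = \sum_(i <- r) sig (G i).
Proof. exact: rmorph_sum. Qed.
Lemma sigC c : sig c%:MP = c%:MP. Proof. by rewrite /sig mmapC. Qed.
Lemma sigX (i : 'I_n.+1) : sig 'X_i = if i == ord_max then 0 else 'X_i.
Proof. by rewrite /sig mmapX mmap1U. Qed.
Lemma sigZ : sig zz = 0. Proof. by rewrite /zz sigX eqxx. Qed.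
Lemma sig_wi (i : 'I_n) : sig 'X_(wi i) = 'X_(wi i).
Proof. by rewrite sigX eq_sym wi_max. Qed.
Lemma sig_mm : sig mm = mm.
Proof. by rewrite /mm sig_sum; apply: eq_bigr => i _; rewrite sig_wi. Qed.
Lemma ellE : @ell k n = mm + zz.
Proof. by rewrite /ell big_ord_recr. Qed.
Lemma sig_ell : sig (@ell k n) = mm.
Proof. by rewrite ellE sigD sig_mm sigZ addr0. Qed.

Lemma polyind (P : R -> Prop) : (forall c, P c%:MP) -> (forall i, P 'X_i) ->
  (forall p q, P p -> P q -> P (p + q)) -> (forall p q, P p -> P q -> P (p * q)) ->
  forall p, P p.
Proof.
move=> HC HX HD HM p; elim/mpolyind: p => [|c m p _ _ IH].
  by have := HC 0; rewrite mpolyC0.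
apply: (HD) => //; rewrite -mul_mpolyC; apply: (HM) => //.
rewrite mpolyXE_id; apply: big_ind; [by have := HC 1; rewrite mpolyC1 | exact: (HM) |].
move=> i _; elim: (m i) => [|e IHe]; first by have := HC 1; rewrite mpolyC1 expr0.
by rewrite exprS; apply: (HM).
Qed.

Lemma sig_idem p : sig (sig p) = sig p.
Proof.
elim/polyind: p => [c|i|p q Hp Hq|p q Hp Hq].
- by rewrite !sigC.
- by rewrite sigX; case: ifP => H; [rewrite sig0 | rewrite sigX H].
- by rewrite !sigD Hp Hq.
- by rewrite !sigM Hp Hq.
Qed.

Lemma decomp p : exists q, p = sig p + zz * q.
Proof.
elim/polyind: p => [c|i|p q [p1 Hp] [q1 Hq]|p q [p1 Hp] [q1 Hq]].
- by exists 0; rewrite sigC mulr0 addr0.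
- rewrite sigX; case: eqP => [->|_]; first by exists 1; rewrite add0r mulr1.
  by exists 0; rewrite mulr0 addr0.
- exists (p1 + q1); rewrite sigD {1}Hp {1}Hq; ring.
- exists (p1 * sig q + sig p * q1 + zz * p1 * q1); rewrite sigM {1}Hp {1}Hq; ring.
Qed.

Lemma sig_inM u : inM u -> inM (sig u).
Proof.
case=> c ->; exists (fun i => sig (c i)); rewrite sig_sum; apply: eq_bigr => i _.
by rewrite sigM sigXn sig_wi.
Qed.

Lemma inM_decomp u : inM u -> exists u1, inM u1 /\ u = sig u + zz * u1.
Proof.
case=> c ->.
have [q Hq] := fin_all_exists (fun i => decomp (c i)).
exists (\sum_(i < n) q i * 'X_(wi i) ^+ d (wi i)); split; first by exists q.
rewrite sig_sum mulr_sumr -big_split; apply: eq_bigr => i _ /=.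
rewrite sigM sigXn sig_wi {1}(Hq i); ring.
Qed.

Lemma ell_pow j : exists g, (mm + zz) ^+ j.+1 = mm ^+ j.+1 + zz * ((j.+1)%:R * mm ^+ j + zz * g).
Proof.
elim: j => [|j [g Hg]]; first by exists 0; rewrite !expr1 expr0; ring.
exists (mm * g + (j.+1)%:R * mm ^+ j + zz * g).
rewrite exprS Hg !exprS; move: (mm ^+ j) => M; ring.
Qed.

Lemma zz_neq0 : zz != 0.
Proof.
apply/eqP => H; have := congr1 (mcoeff U_(ord_max)) H.
by rewrite /zz mcoeffX eqxx mcoeff0 => /eqP; rewrite oner_eq0.
Qed.

Lemma in_idealE (s : seq R) f :
  in_ideal s f <-> exists c : nat -> R, f = \sum_(0 <= i < size s) c i * s`_i.
Proof.
split; first by case=> c ->; exists (fun i => c`_i); rewrite big_mkord.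
case=> c ->; exists (mkseq c (size s)); rewrite big_mkord.
by apply: eq_bigr => i _; rewrite nth_mkseq.
Qed.

Lemma in_ideal_rcons (s : seq R) a f :
  in_ideal (rcons s a) f <-> exists g e, in_ideal s g /\ f = g + e * a.
Proof.
rewrite in_idealE; split.
  case=> c ->; exists (\sum_(0 <= i < size s) c i * s`_i), (c (size s)); split.
    by apply/in_idealE; exists c.
  rewrite size_rcons big_nat_recr //= nth_rcons ltnn eqxx; congr (_ + _).
  by apply: eq_big_nat => i /andP[_ Hi]; rewrite nth_rcons Hi.
case=> g [e [/in_idealE [c ->] ->]].
exists (fun i => if (i < size s)%N then c i else e).
rewrite size_rcons big_nat_recr //= nth_rcons ltnn eqxx; congr (_ + _).
by apply: eq_big_nat => i /andP[_ Hi]; rewrite nth_rcons Hi.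
Qed.

Lemma inM_ideal f :
  in_ideal [seq 'X_(wi i) ^+ d (wi i) | i <- enum 'I_n] f <-> inM f.
Proof.
rewrite in_idealE size_map size_enum_ord; split.
  case=> c ->; exists (fun i => c i); rewrite big_mkord; apply: eq_bigr => i _.
  by rewrite (nth_map i) ?size_enum_ord // nth_ord_enum.
case=> c ->; exists (fun j => oapp c 0 (insub j)); rewrite big_mkord.
apply: eq_bigr => i _; rewrite valK /=.
by rewrite (nth_map i) ?size_enum_ord // nth_ord_enum.
Qed.

Lemma inJ f : in_ideal (@J_gens k n d) f <-> exists u e, inM u /\ f = u + e * zz ^+ 2.
Proof.
rewrite /J_gens cats1 in_ideal_rcons; split.
  by case=> g [e [/inM_ideal Hg ->]]; exists g, e.
by case=> u [e [Hu ->]]; exists u, e; split => //; apply/inM_ideal.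
Qed.

Lemma inI f : in_ideal (@I_gens k n d) f <->
  exists u e e', inM u /\ f = u + e * zz ^+ 2 + e' * (@ell k n) ^+ d ord_max.
Proof.
rewrite /I_gens in_ideal_rcons; split.
  by case=> g [e' [/inJ [u [e [Hu ->]]] ->]]; exists u, e, e'.
by case=> u [e [e' [Hu ->]]]; exists (u + e * zz ^+ 2), e'; split => //; apply/inJ; exists u, e.
Qed.


Lemma main_sec (Hc : [pchar k] =i pred0) (Hd : forall i, (0 < d i)%N)
  (Hodd : odd (\sum_(i < n.+1) (d i - 1))) :
  ideal_eq (colon (@Iideal k n d) zz) (add_principal (@Iideal k n d) zz) /\
  ideal_eq (colon (@Gideal k n d) zz) (add_principal (@Gideal k n d) zz).
Proof.
have Ec : d ord_max = (d ord_max).-1.+1 by rewrite prednK.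
move: (d ord_max).-1 Ec => c' Ec.
have Hodd' : odd (ssum + c').
  by move: Hodd; rewrite big_ord_recr /= Ec subn1.
have [g Hg] := ell_pow c'.
split => f; split.
- rewrite /colon /Iideal => /inI [u [e [e' [Hu Hf]]]].
  have Hs := congr1 sig Hf.
  rewrite sigM sigZ mulr0 !sigD !sigM !sigXn sigZ sig_ell !mulr0 addr0 in Hs.
  have Hmm : inM (mm ^+ d ord_max * sig e').
    have -> : mm ^+ d ord_max * sig e' = - sig u.
      by apply/eqP; rewrite -addr_eq0 mulrC addrC Hs.
    by apply/inMN/sig_inM.
  rewrite Ec in Hmm.
  have [v [w [Hv Hvw]]] := CL Hc Hd Hodd' Hmm.
  have [u1 [Hu1 Hud]] := inM_decomp Hu.
  have [b1 Hb] := decomp e'.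
  set L := (c'.+1)%:R * mm ^+ c' + zz * g.
  exists (u1 + (c'.+1)%:R * v + ((c'.+1)%:R * w + b1) * (@ell k n) ^+ d ord_max).
  exists (e + sig e' * g + b1 * L - ((c'.+1)%:R * w + b1) * L).
  split.
    apply/inI; exists (u1 + (c'.+1)%:R * v), 0, ((c'.+1)%:R * w + b1); split.
      by apply: inMD => //; apply: inMM.
    by rewrite mul0r addr0.
  apply: (mulIf zz_neq0); rewrite Hf Ec ellE Hg /L.
  have Hsu : sig u = - (sig e' * mm ^+ c'.+1).
    by apply/eqP; rewrite -addr_eq0 -Ec Hs.
  have Hv' : v = mm ^+ c' * sig e' - w * mm ^+ c'.+1 by rewrite Hvw addrK.
  move: Hud Hb Hsu Hv'; move: (sig u) (sig e') => su se Hud Hb Hsu Hv'.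
  rewrite Hud Hb Hsu Hv' !exprS; move: (mm ^+ c') => M; ring.
- case=> a [b [Ha ->]]; rewrite /colon /Iideal.
  move/inI: Ha => [u [e [e' [Hu ->]]]].
  apply/inI; exists (u * zz), (e * zz + b), (e' * zz); split.
    by rewrite mulrC; apply: inMM.
  ring.
- rewrite /colon /Gideal /colon => /inJ [u [e [Hu Hf]]].
  have [f1 Hfd] := decomp f.
  have [u1 [Hu1 Hud]] := inM_decomp Hu.
  have Hs := congr1 sig Hf.
  rewrite !sigM sigZ mulr0 mul0r sigD sigM sigXn sigZ expr0n /= mulr0 addr0 in Hs.
  set L := (c'.+1)%:R * mm ^+ c' + zz * g.
  have Heq : u1 = sig f * mm ^+ d ord_max
      + zz * (sig f * L + f1 * (@ell k n) ^+ d ord_max - e).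
    apply: (mulIf zz_neq0).
    have : u = zz * u1 by rewrite Hud -Hs add0r.
    move=> Hu'; rewrite mulrC -Hu' -[u](addrK (e * zz ^+ 2)) -Hf {1}Hfd.
    rewrite Ec ellE Hg /L !exprS; move: (mm ^+ c') => M; ring.
  have Hsu1 : sig u1 = sig f * mm ^+ d ord_max.
    by rewrite {1}Heq sigD !sigM sig_idem sigXn sig_mm sigZ mul0r addr0.
  have Hmm : inM (mm ^+ c'.+1 * sig f).
    by rewrite mulrC -Ec -Hsu1; apply: sig_inM.
  have [v [w [Hv Hvw]]] := CL Hc Hd Hodd' Hmm.
  exists (sig f - (c'.+1)%:R * zz * w), (f1 + (c'.+1)%:R * w); split; last first.
    by rewrite {1}Hfd; ring.
  apply/inJ; exists (sig u1 + zz * ((c'.+1)%:R * v)),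
    (sig f * g - (c'.+1)%:R * w * L); split.
    by apply: inMD; [apply: sig_inM | apply: inMM; apply: inMM].
  have Hv' : v = mm ^+ c' * sig f - w * mm ^+ c'.+1 by rewrite Hvw addrK.
  rewrite Hsu1 Hv' Ec ellE Hg /L.
  move: (sig f) => sf; rewrite !exprS; move: (mm ^+ c') => M; ring.
- case=> a [b [Ha ->]]; rewrite /Gideal /colon in Ha *.
  move/inJ: Ha => [u [e [Hu Ha]]].
  apply/inJ; exists (u * zz), (e * zz + b * (@ell k n) ^+ d ord_max); split.
    by rewrite mulrC; apply: inMM.
  transitivity ((a * (@ell k n) ^+ d ord_max) * zz + b * zz ^+ 2 * (@ell k n) ^+ d ord_max).
    by ring.
  by rewrite Ha; ring.
Qed.

End Setting.

Theorem mainTheorem11 (k : fieldType) (n : nat) (d : 'I_n.+1 -> nat) :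
  [pchar k] =i pred0 ->
  (forall i, (0 < d i)%N) ->
  minimal_gens (@I_gens k n d) ->
  odd (\sum_(i < n.+1) (d i - 1)) ->
  ideal_eq (colon (@Iideal k n d) 'X_ord_max) (add_principal (@Iideal k n d) 'X_ord_max) /\
  ideal_eq (colon (@Gideal k n d) 'X_ord_max) (add_principal (@Gideal k n d) 'X_ord_max).
Proof.
move=> Hc Hd _ Hodd.
exact: (main_sec Hc Hd Hodd).
Qed.
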